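(* Let $(\mathcal A,\mathcal T,(-))$ be a meta-tangible $\mathcal T$-triple and let $a_1\neq a_2$ be elements of $\mathcal T$ with $a_1+a_2=a_2$. Then $a_1(-)a_2=(-)a_2$, equivalently $a_2(-)a_1=a_2$.
   Context: $(\mathcal A,+,\mathbb 0)$ commutative monoid, $\mathcal T\subseteq\mathcal A\setminus\{\mathbb 0\}$. A negation map is $(-):\mathcal A\to\mathcal A$ with $(-)(b_1+b_2)=(-)b_1+(-)b_2$, $(-)((-)b)=b$, $(-)\mathbb 0=\mathbb 0$, $(-)\mathcal T\subseteq\mathcal T$. Write $b(-)c:=b+((-)c)$, $b^\circ:=b(-)b$, $\mathcal A^\circ=\{b^\circ:b\in\mathcal A\}$. A $\mathcal T$-triple $(\mathcal A,\mathcal T,(-))$: such data with an action $\mathcal T\times\mathcal A\to\mathcal A$ satisfying $a(b_1+b_2)=ab_1+ab_2$, $a\mathbb 0=\mathbb 0$, $(-)(ab)=((-)a)b=a((-)b)$, with $\mathcal T\cap\mathcal A^\circ=\emptyset$ and every element of $\mathcal A$ a finite sum of elements of $\mathcal T$. The triple is meta-tangible if $a+b\in\mathcal T$ for all $a,b\in\mathcal T$ with $b\neq(-)a$. *)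

(* Defs.v *)
From Stdlib Require Import List.
Import ListNotations.

Record TTriple := {
  carrier :> Type;
  add : carrier -> carrier -> carrier;
  zero : carrier;
  tang : carrier -> Prop;
  neg : carrier -> carrier;
  act : carrier -> carrier -> carrier;
  add_assoc : forall x y z, add x (add y z) = add (add x y) z;
  add_comm : forall x y, add x y = add y x;
  add_zero : forall x, add x zero = x;
  tang_nz : forall a, tang a -> a <> zero;
  neg_add : forall b1 b2, neg (add b1 b2) = add (neg b1) (neg b2);
  neg_neg : forall b, neg (neg b) = b;
  neg_zero : neg zero = zero;
  neg_tang : forall a, tang a -> tang (neg a);
  act_add : forall a b1 b2, tang a -> act a (add b1 b2) = add (act a b1) (act a b2);
  act_zero : forall a, tang a -> act a zero = zero;
  act_neg_l : forall a b, tang a -> neg (act a b) = act (neg a) b;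
  act_neg_r : forall a b, tang a -> neg (act a b) = act a (neg b);
  (* T ∩ A° = ∅, where b° = b (-) b = b + (-)b *)
  tang_not_circ : forall a b, tang a -> a <> add b (neg b);
  tang_gen : forall b, exists l : list carrier,
      Forall tang l /\ b = fold_right add zero l
}.

Arguments add {_}. Arguments zero {_}. Arguments tang {_}.
Arguments neg {_}. Arguments act {_}.

Definition sub {X : TTriple} (b c : X) : X := add b (neg c).

Definition meta_tangible (X : TTriple) : Prop :=
  forall a b : X, tang a -> tang b -> b <> neg a -> tang (add a b).

(* Main.v *)
Require Import Defs.
From Stdlib Require Import Classical.

Theorem lemma7p11 (X : TTriple) (HX : meta_tangible X) (a1 a2 : X)
  (H1 : tang a1) (H2 : tang a2) (Hne : a1 <> a2) (Hsum : add a1 a2 = a2) :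
  sub a1 a2 = neg a2 /\ sub a2 a1 = a2.
Proof.
  unfold sub.
  assert (Hc : tang (add a1 (neg a2))).
  { apply HX; auto. apply neg_tang; auto.
    intro E. apply Hne. rewrite <- (neg_neg X a1), <- E, neg_neg. reflexivity. }
  assert (Hce : add (add a1 (neg a2)) a2 = add a2 (neg a2)).
  { rewrite <- add_assoc, (add_comm X (neg a2) a2), add_assoc, Hsum. reflexivity. }
  assert (E1 : add a1 (neg a2) = neg a2).
  { destruct (classic (a2 = neg (add a1 (neg a2)))) as [E|E].
    - rewrite <- (neg_neg X (add a1 (neg a2))). rewrite <- E. reflexivity.
    - exfalso. apply (tang_not_circ X _ a2 (HX _ _ Hc H2 E)). exact Hce. }
  split; [exact E1|].
  rewrite <- (neg_neg X a2) at 1. rewrite <- neg_add, add_comm, E1, neg_neg. reflexivity.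
Qed.
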